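(* Let $H$ be a Banach bialgebra and $A$ a left $H$-$\widehat\otimes$-module Arens–Michael algebra. Then the action of $H$ on $A$ is $m$-localizable, i.e., there is a defining family of continuous seminorms $\|\cdot\|$ on $A$ each of which is submultiplicative and $H$-stable.
   Context: Conventions: algebras are complex, associative, unital. $\widehat\otimes$ is the completed projective tensor product. A $\widehat\otimes$-algebra is a complete locally convex algebra with jointly continuous multiplication; a $\widehat\otimes$-bialgebra is a $\widehat\otimes$-algebra $H$ with continuous coassociative comultiplication $\Delta_H\colon H\to H\widehat\otimes H$ and counit $\varepsilon_H\colon H\to\mathbb C$ which are unital algebra homomorphisms; a Banach bialgebra is a $\widehat\otimes$-bialgebra whose underlying space is a Banach space. A left $H$-$\widehat\otimes$-module algebra is a $\widehat\otimes$-algebra $A$ with a continuous bilinear left action $H\times A\to A$ making $A$ a left $H$-module such that $h\cdot(ab)=\mu_A(\Delta_H(h)\cdot(a\otimes b))$ and $h\cdot1=\varepsilon_H(h)1$. An Arens–Michael algebra is a complete locally convex algebra whose topology is given by submultiplicative seminorms. A seminorm $\|\cdot\|$ on $A$ is $H$-stable if there is a continuous seminorm $p$ on $H$ with $\|h\cdot a\|\le p(h)\|a\|$ for all $h\in H$, $a\in A$. *)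

(* Defs.v *)
From Stdlib Require Import Reals List.
Open Scope R_scope.

Record Cx := mkC { Cre : R; Cim : R }.
Definition Cadd (a b : Cx) := mkC (Cre a + Cre b) (Cim a + Cim b).
Definition Cmul (a b : Cx) :=
  mkC (Cre a * Cre b - Cim a * Cim b) (Cre a * Cim b + Cim a * Cre b).
Definition C1 := mkC 1 0.
Definition Cmod (a : Cx) := sqrt (Cre a ^ 2 + Cim a ^ 2).

Record LCS := {
  car :> Type;
  vzero : car;
  vadd : car -> car -> car;
  vopp : car -> car;
  vscal : Cx -> car -> car;
  vaddA : forall x y z, vadd x (vadd y z) = vadd (vadd x y) z;
  vaddC : forall x y, vadd x y = vadd y x;
  vadd0 : forall x, vadd vzero x = x;
  vaddN : forall x, vadd (vopp x) x = vzero;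
  vscalDr : forall c x y, vscal c (vadd x y) = vadd (vscal c x) (vscal c y);
  vscalDl : forall c d x, vscal (Cadd c d) x = vadd (vscal c x) (vscal d x);
  vscalA : forall c d x, vscal c (vscal d x) = vscal (Cmul c d) x;
  vscal1 : forall x, vscal C1 x = x;
  idx : Type;
  sn : idx -> car -> R;
  sn_tri : forall i x y, sn i (vadd x y) <= sn i x + sn i y;
  sn_hom : forall i c x, sn i (vscal c x) = Cmod c * sn i x;
  sn_sep : forall x, (forall i, sn i x = 0) -> x = vzero
}.
Arguments vzero E : rename.
Arguments vadd {E} _ _ : rename.
Arguments vopp {E} _ : rename.
Arguments vscal {E} _ _ : rename.
Arguments sn E _ _ : rename.

Definition vsub {E : LCS} (x y : E) : E := vadd x (vopp y).

Definition maxl {I X : Type} (p : I -> X -> R) (L : list I) (x : X) : R :=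
  fold_right (fun i m => Rmax (p i x) m) 0 L.

Definition is_seminorm (E : LCS) (q : E -> R) : Prop :=
  (forall x y, q (vadd x y) <= q x + q y) /\
  (forall c x, q (vscal c x) = Cmod c * q x).

Definition cont_seminorm (E : LCS) (q : E -> R) : Prop :=
  is_seminorm E q /\
  exists (L : list (idx E)) (K : R), forall x, q x <= K * maxl (sn E) L x.

(* a defining family of continuous seminorms: generates the topology of E *)
Definition defining_family (E : LCS) (J : Type) (q : J -> E -> R) : Prop :=
  (forall j, cont_seminorm E (q j)) /\
  (forall i, exists (L : list J) (K : R), forall x, sn E i x <= K * maxl q L x).

Definition complete (E : LCS) : Prop :=
  forall (D : Type) (le : D -> D -> Prop) (x : D -> E),
    inhabited D ->
    (forall a, le a a) ->
    (forall a b c, le a b -> le b c -> le a c) ->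
    (forall a b, exists c, le a c /\ le b c) ->
    (forall i eps, 0 < eps -> exists d0, forall d d',
         le d0 d -> le d0 d' -> sn E i (vsub (x d) (x d')) < eps) ->
    exists l : E, forall i eps, 0 < eps -> exists d0, forall d,
         le d0 d -> sn E i (vsub (x d) l) < eps.

Definition linear {E F : LCS} (f : E -> F) : Prop :=
  (forall x y, f (vadd x y) = vadd (f x) (f y)) /\
  (forall c x, f (vscal c x) = vscal c (f x)).

Definition cont_linear {E F : LCS} (f : E -> F) : Prop :=
  linear f /\
  forall j, exists (L : list (idx E)) (K : R), forall x,
    sn F j (f x) <= K * maxl (sn E) L x.

Definition bilinear {E F G : LCS} (phi : E -> F -> G) : Prop :=
  (forall y, linear (fun x => phi x y)) /\ (forall x, linear (phi x)).

Definition cont_bilinear {E F G : LCS} (phi : E -> F -> G) : Prop :=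
  bilinear phi /\
  forall k, exists (L1 : list (idx E)) (L2 : list (idx F)) (K : R),
    forall x y, sn G k (phi x y) <= K * maxl (sn E) L1 x * maxl (sn F) L2 y.

(* T with t : E x F -> T is a completed projective tensor product E (^x) F:
   T complete, t jointly continuous bilinear, and every jointly continuous
   bilinear map into a complete LCS factors uniquely through a continuous
   linear map on T. *)
Definition is_ptensor (E F T : LCS) (t : E -> F -> T) : Prop :=
  complete T /\ cont_bilinear t /\
  forall (G : LCS) (phi : E -> F -> G), complete G -> cont_bilinear phi ->
    (exists psi : T -> G, cont_linear psi /\ forall x y, psi (t x y) = phi x y) /\
    (forall psi1 psi2 : T -> G, cont_linear psi1 -> cont_linear psi2 ->
       (forall x y, psi1 (t x y) = phi x y) ->
       (forall x y, psi2 (t x y) = phi x y) -> forall z, psi1 z = psi2 z).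

Record LCAlg := {
  alcs :> LCS;
  amul : alcs -> alcs -> alcs;
  aone : alcs;
  amulA : forall x y z, amul x (amul y z) = amul (amul x y) z;
  amul1l : forall x, amul aone x = x;
  amul1r : forall x, amul x aone = x;
  amul_cbil : cont_bilinear amul;
  acomplete : complete alcs
}.
Arguments amul {l} _ _ : rename.
Arguments aone l : rename.

Definition submult (A : LCAlg) (q : A -> R) : Prop :=
  forall x y, q (amul x y) <= q x * q y.

Definition ArensMichael (A : LCAlg) : Prop :=
  exists (J : Type) (q : J -> A -> R),
    defining_family A J q /\ forall j, submult A (q j).

Record BBialg := {
  bH :> LCAlg;
  (* underlying space is Banach: topology given by a single norm *)
  bnorm : bH -> R;
  bnorm_def : defining_family bH unit (fun _ => bnorm);
  bnorm_sep : forall x, bnorm x = 0 -> x = vzero bH;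
  (* H (^x) H, an (^x)-algebra with (x(x)y)(x'(x)y') = xx'(x)yy' *)
  bHH : LCAlg;
  btens : bH -> bH -> bHH;
  btens_pt : is_ptensor bH bH bHH btens;
  btens_mul : forall x y x' y',
      amul (btens x y) (btens x' y') = btens (amul x x') (amul y y');
  bHHH : LCS;
  btens3 : bHH -> bH -> bHHH;
  btens3_pt : is_ptensor bHH bH bHHH btens3;
  Delta : bH -> bHH;
  Delta_cl : cont_linear Delta;
  Delta_mul : forall x y, Delta (amul x y) = amul (Delta x) (Delta y);
  Delta_one : Delta (aone bH) = aone bHH;
  beps : bH -> Cx;
  beps_add : forall x y, beps (vadd x y) = Cadd (beps x) (beps y);
  beps_scal : forall c x, beps (vscal c x) = Cmul c (beps x);
  beps_cont : exists (L : list (idx bH)) (K : R), forall x,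
      Cmod (beps x) <= K * maxl (sn bH) L x;
  beps_mul : forall x y, beps (amul x y) = Cmul (beps x) (beps y);
  beps_one : beps (aone bH) = C1;
  (* coassociativity (Delta (x) id) Delta = (id (x) Delta) Delta, with
     H(^x)(H(^x)H) identified with (H(^x)H)(^x)H; iota x is u(x)v |-> (x(x)u)(x)v *)
  coassoc : forall (Lm Rm : bHH -> bHHH) (iota : bH -> bHH -> bHHH),
      cont_linear Lm -> cont_linear Rm -> (forall x, cont_linear (iota x)) ->
      (forall x y, Lm (btens x y) = btens3 (Delta x) y) ->
      (forall x u v, iota x (btens u v) = btens3 (btens x u) v) ->
      (forall x y, Rm (btens x y) = iota x (Delta y)) ->
      forall h, Lm (Delta h) = Rm (Delta h);
  (* counit laws (eps (x) id) Delta = id = (id (x) eps) Delta *)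
  counit_l : forall E : bHH -> bH, cont_linear E ->
      (forall x y, E (btens x y) = vscal (beps x) y) ->
      forall h, E (Delta h) = h;
  counit_r : forall E : bHH -> bH, cont_linear E ->
      (forall x y, E (btens x y) = vscal (beps y) x) ->
      forall h, E (Delta h) = h
}.

Record HModAlg (H : BBialg) := {
  mA :> LCAlg;
  act : H -> mA -> mA;
  act_cbil : cont_bilinear act;
  act_mul : forall h k a, act (amul h k) a = act h (act k a);
  act_1 : forall a, act (aone H) a = a;
  (* h.(ab) = mu_A(Delta(h).(a (x) b)); Phi_{a,b} is the continuous linear
     map H(^x)H -> A, x(x)y |-> (x.a)(y.b) *)
  act_amul : forall (a b : mA) (Phi : bHH H -> mA), cont_linear Phi ->
      (forall x y, Phi (btens H x y) = amul (act x a) (act y b)) ->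
      forall h, act h (amul a b) = Phi (Delta H h);
  act_aone : forall h, act h (aone mA) = vscal (beps H h) (aone mA)
}.
Arguments act {H} _ _ _.

Definition H_stable (H : BBialg) (A : HModAlg H) (q : A -> R) : Prop :=
  exists p : H -> R, cont_seminorm H p /\
    forall h a, q (act A h a) <= p h * q a.

(* Main.v *)
Require Import Defs.
From Stdlib Require Import Reals List Lra Psatz ClassicalEpsilon FunctionalExtensionality ProofIrrelevance.
Open Scope R_scope.

Definition Cr (r : R) : Cx := mkC r 0.
Lemma Cmod_r (r : R) : Cmod (Cr r) = Rabs r.
Proof. unfold Cmod, Cr; simpl. rewrite <- sqrt_Rsqr_abs. f_equal. unfold Rsqr; ring. Qed.
Lemma Cmod_ge0 c : 0 <= Cmod c.
Proof. unfold Cmod; apply sqrt_pos. Qed.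
Lemma Cmul_r r s : Cmul (Cr r) (Cr s) = Cr (r * s).
Proof. unfold Cmul, Cr; simpl; f_equal; ring. Qed.
Lemma Cadd_r r s : Cadd (Cr r) (Cr s) = Cr (r + s).
Proof. unfold Cadd, Cr; simpl; f_equal; ring. Qed.
Lemma C1_r : Defs.C1 = Cr 1. Proof. reflexivity. Qed.

Lemma vadd0r (E : LCS) (x : E) : vadd x (vzero E) = x.
Proof. rewrite vaddC; apply vadd0. Qed.
Lemma vaddNr (E : LCS) (x : E) : vadd x (vopp x) = vzero E.
Proof. rewrite vaddC; apply vaddN. Qed.
Lemma vadd_cancel (E : LCS) (x y z : E) : vadd x y = vadd x z -> y = z.
Proof.
  intro Hh. rewrite <- (vadd0 E y), <- (vadd0 E z), <- (vaddN E x), <- !vaddA, Hh; auto.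
Qed.
Lemma vscal0 (E : LCS) (x : E) : vscal (Cr 0) x = vzero E.
Proof.
  apply (vadd_cancel E (vscal (Cr 0) x)). rewrite vadd0r, <- vscalDl, Cadd_r, Rplus_0_r; auto.
Qed.
Lemma vscalN1 (E : LCS) (x : E) : vscal (Cr (-1)) x = vopp x.
Proof.
  apply (vadd_cancel E x). rewrite vaddNr. rewrite <- (vscal1 E x) at 1.
  rewrite C1_r, <- vscalDl, Cadd_r. replace (1 + -1) with 0 by ring. apply vscal0.
Qed.
Lemma vsub_tri_eq (E : LCS) (x y z : E) : vadd (vsub x y) (vsub y z) = vsub x z.
Proof.
  unfold vsub. rewrite vaddA. f_equal. rewrite <- vaddA, vaddN, vadd0r. auto.
Qed.
Lemma vsub_opp (E : LCS) (x y : E) : vopp (vsub x y) = vsub y x.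
Proof.
  unfold vsub. apply (vadd_cancel E (vadd x (vopp y))). rewrite vaddNr.
  rewrite vaddA, <- (vaddA E x), vaddN, vadd0r, vaddNr. auto.
Qed.
Lemma lin0 {E F : LCS} (f : E -> F) : Defs.linear f -> f (vzero E) = vzero F.
Proof.
  intros [Ha _]. apply (vadd_cancel F (f (vzero E))). rewrite <- Ha, !vadd0r. auto.
Qed.
Lemma linN {E F : LCS} (f : E -> F) x : Defs.linear f -> f (vopp x) = vopp (f x).
Proof. intros Hl. rewrite <- !vscalN1. apply (proj2 Hl). Qed.

Lemma sn_is (E : LCS) i : is_seminorm E (sn E i).
Proof. split; [apply sn_tri | apply sn_hom]. Qed.
Lemma semi0 (E : LCS) q : is_seminorm E q -> q (vzero E) = 0.
Proof.
  intros [_ Hh]. rewrite <- (vscal0 E (vzero E)), Hh, Cmod_r, Rabs_R0; ring.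
Qed.
Lemma semiN (E : LCS) q x : is_seminorm E q -> q (vopp x) = q x.
Proof.
  intros [_ Hh]. rewrite <- vscalN1, Hh, Cmod_r. rewrite Rabs_left by lra. ring.
Qed.
Lemma semi_ge0 (E : LCS) q x : is_seminorm E q -> 0 <= q x.
Proof.
  intros Hs. pose proof (proj1 Hs x (vopp x)) as Ht. rewrite vaddNr, semi0, semiN in Ht by auto. lra.
Qed.
Lemma semi_subtri (E : LCS) q (x y z : E) : is_seminorm E q -> q (vsub x z) <= q (vsub x y) + q (vsub y z).
Proof. intros Hs. rewrite <- (vsub_tri_eq E x y z). apply Hs. Qed.
Lemma semi_subC (E : LCS) q (x y : E) : is_seminorm E q -> q (vsub x y) = q (vsub y x).
Proof. intros Hs. rewrite <- vsub_opp, semiN; auto. Qed.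
Lemma semi_r (E : LCS) q (r : R) x : is_seminorm E q -> q (vscal (Cr r) x) = Rabs r * q x.
Proof. intros Hs. rewrite (proj2 Hs), Cmod_r; auto. Qed.

Lemma maxl_ge0 {I X} (p : I -> X -> R) L x : 0 <= maxl p L x.
Proof. induction L; simpl; [lra|]. eapply Rle_trans; [exact IHL|apply Rmax_r]. Qed.
Lemma maxl_in {I X} (p : I -> X -> R) L x i : In i L -> p i x <= maxl p L x.
Proof.
  induction L; simpl; [tauto|]. intros [->|Hi]; [apply Rmax_l|].
  eapply Rle_trans; [apply IHL; auto|apply Rmax_r].
Qed.
Lemma maxl_lub {I X} (p : I -> X -> R) L x M :
  0 <= M -> (forall i, In i L -> p i x <= M) -> maxl p L x <= M.
Proof.
  intros H0 Hh. induction L; simpl; auto. apply Rmax_lub; [apply Hh; simpl; auto|].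
  apply IHL; intros; apply Hh; simpl; auto.
Qed.
Lemma maxl_appl {I X} (p : I -> X -> R) L L' x : maxl p L x <= maxl p (L ++ L') x.
Proof. apply maxl_lub; [apply maxl_ge0|]. intros; apply maxl_in, in_or_app; auto. Qed.
Lemma maxl_appr {I X} (p : I -> X -> R) L L' x : maxl p L' x <= maxl p (L ++ L') x.
Proof. apply maxl_lub; [apply maxl_ge0|]. intros; apply maxl_in, in_or_app; auto. Qed.
Lemma maxl_nil {I X} (p : I -> X -> R) x : maxl p nil x = 0.
Proof. reflexivity. Qed.

Lemma list_bound {I J X} (f : I -> X -> R) (g : list J -> X -> R) :
  (forall L x, 0 <= g L x) ->
  (forall L L' x, g L x <= g (L ++ L') x) ->
  (forall L L' x, g L' x <= g (L ++ L') x) ->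
  (forall i, exists L K, forall x, f i x <= K * g L x) ->
  forall L0, exists L K, 0 <= K /\ forall x, maxl f L0 x <= K * g L x.
Proof.
  intros g0 gl gr Hf L0. induction L0 as [|i L0 IH].
  - exists nil, 0. split; [lra|]. intros; simpl. rewrite Rmult_0_l; lra.
  - destruct IH as [L1 [K1 [K1p H1]]]. destruct (Hf i) as [L2 [K2 H2]].
    exists (L1 ++ L2), (K1 + Rabs K2). split. { pose proof (Rabs_pos K2); lra. }
    intros x. simpl. apply Rmax_lub.
    + eapply Rle_trans; [apply H2|].
      assert (K2 * g L2 x <= Rabs K2 * g L2 x).
      { apply Rmult_le_compat_r; [auto|apply RRle_abs]. }
      pose proof (gr L1 L2 x). pose proof (g0 (L1++L2) x). pose proof (Rabs_pos K2). pose proof (g0 L2 x). nra.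
    + eapply Rle_trans; [apply H1|].
      pose proof (gl L1 L2 x). pose proof (g0 (L1++L2) x). pose proof (Rabs_pos K2). pose proof (g0 L1 x). nra.
Qed.

Lemma abs_bound (K m : R) : 0 <= m -> K * m <= Rabs K * m.
Proof. intros; apply Rmult_le_compat_r; [auto|apply RRle_abs]. Qed.

Definition supset {T} (g : T -> R) := fun r => r = 0 \/ exists t, r = g t.
Definition supf {T} (g : T -> R) : R :=
  epsilon (inhabits 0) (fun m => is_lub (supset g) m).
Lemma supf_spec {T} (g : T -> R) M : (forall t, g t <= M) -> is_lub (supset g) (supf g).
Proof.
  intros HM. unfold supf. apply epsilon_spec.
  destruct (completeness (supset g)) as [m Hm].
  - exists (Rmax M 0). intros r [->|[t ->]]; [apply Rmax_r|]. eapply Rle_trans; [apply HM|apply Rmax_l].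
  - exists 0; left; auto.
  - exists m; auto.
Qed.
Lemma supf_ge {T} (g : T -> R) M t : (forall t, g t <= M) -> g t <= supf g.
Proof. intros HM. apply (proj1 (supf_spec g M HM)). right; exists t; auto. Qed.
Lemma supf_ge0 {T} (g : T -> R) M : (forall t, g t <= M) -> 0 <= supf g.
Proof. intros HM. apply (proj1 (supf_spec g M HM)). left; auto. Qed.
Lemma supf_le {T} (g : T -> R) M : 0 <= M -> (forall t, g t <= M) -> supf g <= M.
Proof.
  intros H0 HM. apply (proj2 (supf_spec g M HM)). intros r [->|[t ->]]; auto.
Qed.

Definition bnd (A : LCS) (q : A -> R) (S : Type) := {f : S -> A | exists M, forall s, q (f s) <= M}.

Lemma bnd_eq (A : LCS) q S (f g : bnd A q S) : (forall s, proj1_sig f s = proj1_sig g s) -> f = g.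
Proof.
  destruct f as [f pf], g as [g pg]; simpl. intros Hh.
  assert (f = g) by (apply functional_extensionality; auto). subst g.
  f_equal. apply proof_irrelevance.
Qed.


Lemma bnd_zero (A : LCS) q S : is_seminorm A q -> exists M, forall s : S, q (vzero A) <= M.
Proof. intros Hq. exists 0; intros; rewrite semi0; auto; lra. Qed.
Lemma bnd_add (A : LCS) q S (f g : S -> A) : is_seminorm A q ->
  (exists M, forall s, q (f s) <= M) -> (exists M, forall s, q (g s) <= M) ->
  exists M, forall s, q (vadd (f s) (g s)) <= M.
Proof.
  intros Hq [M1 H1] [M2 H2]. exists (M1 + M2). intros s.
  eapply Rle_trans; [apply Hq|]. specialize (H1 s); specialize (H2 s); lra.
Qed.
Lemma bnd_opp (A : LCS) q S (f : S -> A) : is_seminorm A q ->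
  (exists M, forall s, q (f s) <= M) -> exists M, forall s, q (vopp (f s)) <= M.
Proof. intros Hq [M1 H1]. exists M1. intros s. rewrite semiN; auto. Qed.
Lemma bnd_scal (A : LCS) q S c (f : S -> A) : is_seminorm A q ->
  (exists M, forall s, q (f s) <= M) -> exists M, forall s, q (vscal c (f s)) <= M.
Proof.
  intros Hq [M1 H1]. exists (Cmod c * M1). intros s. rewrite (proj2 Hq).
  apply Rmult_le_compat_l; [apply Cmod_ge0|auto].
Qed.

Definition Gz (A : LCS) q S (Hq : is_seminorm A q) : bnd A q S :=
  exist _ (fun _ => vzero A) (bnd_zero A q S Hq).
Definition Gadd (A : LCS) q S (Hq : is_seminorm A q) (f g : bnd A q S) : bnd A q S :=
  exist _ (fun s => vadd (proj1_sig f s) (proj1_sig g s))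
    (bnd_add A q S _ _ Hq (proj2_sig f) (proj2_sig g)).
Definition Gopp (A : LCS) q S (Hq : is_seminorm A q) (f : bnd A q S) : bnd A q S :=
  exist _ (fun s => vopp (proj1_sig f s)) (bnd_opp A q S _ Hq (proj2_sig f)).
Definition Gscal (A : LCS) q S (Hq : is_seminorm A q) c (f : bnd A q S) : bnd A q S :=
  exist _ (fun s => vscal c (proj1_sig f s)) (bnd_scal A q S c _ Hq (proj2_sig f)).
Definition Gsn (A : LCS) q S (j : option (Defs.idx A * S)) (f : bnd A q S) : R :=
  match j with
  | None => supf (fun s => q (proj1_sig f s))
  | Some (i, s) => sn A i (proj1_sig f s)
  end.

Lemma pt_le_sup (A : LCS) q S (f : bnd A q S) s : q (proj1_sig f s) <= Gsn A q S None f.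
Proof. destruct f as [f [M HM]]. simpl. apply (supf_ge (fun s => q (f s)) M s HM). Qed.
Lemma sup_ge0 (A : LCS) q S (f : bnd A q S) : 0 <= Gsn A q S None f.
Proof. destruct f as [f [M HM]]. simpl. apply (supf_ge0 (fun s => q (f s)) M HM). Qed.

Lemma supf_scale {T} (g : T -> R) c M : 0 <= c -> (forall t, g t <= M) ->
  supf (fun t => c * g t) = c * supf g.
Proof.
  intros Hc HM. pose proof (supf_ge0 g M HM) as S0.
  assert (Hb : forall t, c * g t <= c * M) by (intros; apply Rmult_le_compat_l; auto).
  apply Rle_antisym.
  - apply supf_le. { apply Rmult_le_pos; auto. }
    intros t; apply Rmult_le_compat_l; auto. apply (supf_ge _ M); auto.
  - destruct (Req_dec c 0) as [->|Hc0].
    + rewrite Rmult_0_l. apply (supf_ge0 _ (0 * M)); auto.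
    + pose proof (supf_ge0 _ _ Hb) as S1.
      assert (supf g <= supf (fun t => c * g t) / c).
      { apply supf_le. { apply Rmult_le_pos; auto. apply Rlt_le, Rinv_0_lt_compat; lra. }
        intros t. pose proof (supf_ge _ _ t Hb). simpl in H.
        apply (Rmult_le_reg_l c); [lra|]. field_simplify; [|lra]. lra. }
      apply (Rmult_le_compat_l c) in H; [|auto]. field_simplify in H; lra.
Qed.

Definition GL (A : LCS) q (S : Type) (Hq : is_seminorm A q) : LCS.
Proof.
  refine {| car := bnd A q S; vzero := Gz A q S Hq; vadd := Gadd A q S Hq;
            vopp := Gopp A q S Hq; vscal := Gscal A q S Hq;
            idx := option (Defs.idx A * S); sn := Gsn A q S |}.
  - intros; apply bnd_eq; intros; simpl; apply vaddA.
  - intros; apply bnd_eq; intros; simpl; apply vaddC.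
  - intros; apply bnd_eq; intros; simpl; apply vadd0.
  - intros; apply bnd_eq; intros; simpl; apply vaddN.
  - intros; apply bnd_eq; intros; simpl; apply vscalDr.
  - intros; apply bnd_eq; intros; simpl; apply vscalDl.
  - intros; apply bnd_eq; intros; simpl; apply vscalA.
  - intros; apply bnd_eq; intros; simpl; apply vscal1.
  - intros [[i s]|] x y; simpl.
    + apply sn_tri.
    + apply supf_le. { pose proof (sup_ge0 A q S x); pose proof (sup_ge0 A q S y); simpl in *; lra. }
      intros s. eapply Rle_trans; [apply Hq|].
      pose proof (pt_le_sup A q S x s); pose proof (pt_le_sup A q S y s); simpl in *; lra.
  - intros [[i s]|] c x; simpl.
    + apply sn_hom.
    + destruct x as [f [M HM]]; simpl.
      rewrite <- (supf_scale _ _ M); [|apply Cmod_ge0|auto].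
      f_equal. apply functional_extensionality; intros s. apply Hq.
  - intros x Hx. apply bnd_eq; intros s; simpl. apply sn_sep. intros i. apply (Hx (Some (i, s))).
Defined.

Lemma ev_list {D I : Type} (le : D -> D -> Prop) (P : I -> D -> Prop) (L : list I) :
  inhabited D -> (forall a b c, le a b -> le b c -> le a c) ->
  (forall a b, exists c, le a c /\ le b c) ->
  (forall i, exists d0, forall d, le d0 d -> P i d) ->
  exists d0, forall d, le d0 d -> forall i, In i L -> P i d.
Proof.
  intros [d00] Htr Hdir HP. induction L as [|i L IH].
  - exists d00. intros d _ i [].
  - destruct IH as [d1 H1]. destruct (HP i) as [d2 H2]. destruct (Hdir d1 d2) as [c [Hc1 Hc2]].
    exists c. intros d Hd j [<-|Hj]; [apply H2; eauto|apply H1; eauto].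
Qed.

Lemma le_eps (x e : R) : (forall eps, 0 < eps -> x <= e + eps) -> x <= e.
Proof.
  intros Hh. destruct (Rle_dec x e) as [|Hn]; auto. exfalso.
  specialize (Hh ((x - e) / 2)). assert (0 < (x - e) / 2) by lra. specialize (Hh H). lra.
Qed.

Lemma GL_complete (A : LCS) q (S : Type) (Hq : is_seminorm A q) :
  Defs.complete A -> (exists L K, forall x, q x <= K * maxl (sn A) L x) ->
  Defs.complete (GL A q S Hq).
Proof.
  intros HA [Lq [Kq HKq]] D le x Dinh Hrefl Htr Hdir Hc.
  set (f := fun d s => proj1_sig (x d) s).
  assert (Hpc : forall s, exists l : A, forall i eps, 0 < eps -> exists d0, forall d,
             le d0 d -> sn A i (vsub (f d s) l) < eps).
  { intros s. apply (HA D le (fun d => f d s) Dinh Hrefl Htr Hdir).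
    intros i eps He. destruct (Hc (Some (i, s)) eps He) as [d0 Hd0]. exists d0.
    intros d d' H1 H2. apply (Hd0 d d' H1 H2). }
  set (l := fun s => epsilon (inhabits (vzero A)) (fun l : A => forall i eps, 0 < eps -> exists d0,
             forall d, le d0 d -> sn A i (vsub (f d s) l) < eps)).
  assert (Hl : forall s i eps, 0 < eps -> exists d0, forall d, le d0 d -> sn A i (vsub (f d s) (l s)) < eps).
  { intros s. unfold l. apply (epsilon_spec (inhabits (vzero A)) (fun l : A => forall i eps, 0 < eps -> exists d0,
             forall d, le d0 d -> sn A i (vsub (f d s) l) < eps)). apply Hpc. }
  assert (Hlq : forall s eps, 0 < eps -> exists d0, forall d, le d0 d -> q (vsub (f d s) (l s)) < eps).
  { intros s eps He. set (K' := Rabs Kq + 1).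
    assert (HK' : 0 < K') by (unfold K'; pose proof (Rabs_pos Kq); lra).
    destruct (ev_list le (fun i d => sn A i (vsub (f d s) (l s)) < eps / K') Lq Dinh Htr Hdir) as [d0 Hd0].
    { intros i. apply Hl. apply Rdiv_lt_0_compat; auto. }
    exists d0. intros d Hd. eapply Rle_lt_trans; [apply HKq|].
    assert (Hm : maxl (sn A) Lq (vsub (f d s) (l s)) <= eps / K').
    { apply maxl_lub. { apply Rlt_le, Rdiv_lt_0_compat; auto. }
      intros i Hi. apply Rlt_le, Hd0; auto. }
    eapply Rle_lt_trans; [apply abs_bound, maxl_ge0|].
    pose proof (maxl_ge0 (sn A) Lq (vsub (f d s) (l s))).
    pose proof (Rabs_pos Kq).
    apply Rle_lt_trans with (Rabs Kq * (eps / K')). { apply Rmult_le_compat_l; auto. }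
    unfold K'. apply (Rmult_lt_reg_r (Rabs Kq + 1)); [lra|]. field_simplify; lra. }
  assert (Hkey : forall s e d0, (forall d d', le d0 d -> le d0 d' -> q (vsub (f d s) (f d' s)) <= e) ->
            forall d, le d0 d -> q (vsub (f d s) (l s)) <= e).
  { intros s e d0 Hd0 d Hd. apply le_eps. intros eps He.
    destruct (Hlq s eps He) as [d1 Hd1]. destruct (Hdir d d1) as [c [Hc1 Hc2]].
    eapply Rle_trans; [apply (semi_subtri A q _ (f c s)); auto|].
    pose proof (Hd0 d c Hd (Htr _ _ _ Hd Hc1)). pose proof (Hd1 c Hc2). lra. }
  assert (Hsc : forall eps, 0 < eps -> exists d0, forall d d', le d0 d -> le d0 d' -> forall s,
             q (vsub (f d s) (f d' s)) <= eps).
  { intros eps He. destruct (Hc None eps He) as [d0 Hd0]. exists d0. intros d d' H1 H2 s.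
    pose proof (pt_le_sup A q S (vsub (x d) (x d')) s) as Hp. specialize (Hd0 d d' H1 H2).
    apply Rle_trans with (Gsn A q S None (vsub (x d) (x d'))); [exact Hp | apply Rlt_le; exact Hd0]. }
  assert (Hbd : exists M, forall s, q (l s) <= M).
  { destruct (Hsc 1 Rlt_0_1) as [d0 Hd0]. destruct (proj2_sig (x d0)) as [M HM].
    exists (1 + M). intros s.
    assert (Heq : l s = vadd (vsub (l s) (f d0 s)) (f d0 s)).
    { unfold vsub. rewrite <- vaddA, vaddN, vadd0r. auto. }
    rewrite Heq. eapply Rle_trans; [apply Hq|]. rewrite semi_subC by auto.
    pose proof (Hkey s 1 d0 (fun d d' H1 H2 => Hd0 d d' H1 H2 s) d0 (Hrefl d0)).
    pose proof (HM s). unfold f in *. lra. }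
  exists (exist _ l Hbd : GL A q S Hq).
  intros [[i s]|] eps He.
  - destruct (Hl s i eps He) as [d0 Hd0]. exists d0. intros d Hd. apply (Hd0 d Hd).
  - assert (He2 : 0 < eps / 2) by lra. destruct (Hsc _ He2) as [d0 Hd0]. exists d0. intros d Hd.
    simpl. apply Rle_lt_trans with (eps / 2); [|lra].
    apply supf_le; [lra|]. intros s. apply (Hkey s (eps/2) d0 (fun d d' H1 H2 => Hd0 d d' H1 H2 s) d Hd).
Qed.

Lemma bn_semi (H : BBialg) : is_seminorm H (bnorm H).
Proof. exact (proj1 (proj1 (bnorm_def H) tt)). Qed.
Lemma bn_ge0 (H : BBialg) h : 0 <= bnorm H h.
Proof. apply (semi_ge0 H); apply bn_semi. Qed.
Lemma bn_snH (H : BBialg) : exists L K, 0 <= K /\ forall h, bnorm H h <= K * maxl (sn H) L h.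
Proof.
  destruct (proj2 (proj1 (bnorm_def H) tt)) as [L [K HK]]. exists L, (Rabs K). split; [apply Rabs_pos|].
  intros h. eapply Rle_trans; [apply HK|apply abs_bound, maxl_ge0].
Qed.
Lemma maxl_unit {X} (p : X -> R) (L : list unit) x : 0 <= p x -> maxl (fun _ => p) L x <= p x.
Proof. intros; apply maxl_lub; auto. intros; lra. Qed.
Lemma snH_bn (H : BBialg) L0 : exists K, 0 <= K /\ forall h, maxl (sn H) L0 h <= K * bnorm H h.
Proof.
  destruct (list_bound (sn H) (fun (_ : list unit) h => bnorm H h)) with (L0 := L0) as [L [K [HK1 HK2]]].
  - intros; apply bn_ge0.
  - intros; lra.
  - intros; lra.
  - intros i. destruct (proj2 (bnorm_def H) i) as [L [K HK]]. exists L, (Rabs K). intros x.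
    eapply Rle_trans; [apply HK|]. eapply Rle_trans; [apply abs_bound, maxl_ge0|].
    apply Rmult_le_compat_l; [apply Rabs_pos|]. apply maxl_unit, bn_ge0.
  - exists K; split; auto.
Qed.

Lemma prod3 (K a b c1 c2 x y : R) : 0 <= a -> 0 <= b -> 0 <= c1 -> 0 <= c2 ->
  a <= c1 * x -> b <= c2 * y -> K * a * b <= (Rabs K * c1 * c2) * (x * y).
Proof.
  intros Ha Hb Hc1 Hc2 H1 H2. pose proof (Rabs_pos K).
  apply Rle_trans with (Rabs K * a * b).
  { rewrite !Rmult_assoc. apply Rmult_le_compat_r; [nra|apply RRle_abs]. }
  replace (Rabs K * c1 * c2 * (x * y)) with (Rabs K * ((c1 * x) * (c2 * y))) by ring.
  rewrite Rmult_assoc. apply Rmult_le_compat_l; auto. apply Rmult_le_compat; auto.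
Qed.

Lemma bn_mul (H : BBialg) : exists C, 0 <= C /\ forall h k, bnorm H (amul h k) <= C * bnorm H h * bnorm H k.
Proof.
  destruct (bn_snH H) as [Lb [Kb [HKb HbL]]].
  destruct (list_bound (fun i (p : H * H) => sn H i (amul (fst p) (snd p)))
              (fun (_ : list unit) (p : H * H) => bnorm H (fst p) * bnorm H (snd p))) with (L0 := Lb)
    as [L [K [HK1 HK2]]].
  - intros; apply Rmult_le_pos; apply bn_ge0.
  - intros; lra.
  - intros; lra.
  - intros i. destruct (proj2 (amul_cbil H) i) as [L1 [L2 [K HK]]].
    destruct (snH_bn H L1) as [c1 [Hc1 H1]]. destruct (snH_bn H L2) as [c2 [Hc2 H2]].
    exists nil, (Rabs K * c1 * c2). intros [h k]; simpl.
    eapply Rle_trans; [apply HK|]. apply prod3; auto; apply maxl_ge0.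
  - exists (Kb * K). split; [nra|]. intros h k. eapply Rle_trans; [apply HbL|].
    specialize (HK2 (h, k)). simpl in HK2. rewrite !Rmult_assoc. apply Rmult_le_compat_l; auto.
Qed.

Lemma act_lin1 (H : BBialg) (A : HModAlg H) a : Defs.linear (fun x => act A x a).
Proof. exact (proj1 (proj1 (act_cbil H A)) a). Qed.
Lemma act_lin2 (H : BBialg) (A : HModAlg H) x : Defs.linear (act A x).
Proof. exact (proj2 (proj1 (act_cbil H A)) x). Qed.

Lemma bnd_act (H : BBialg) (A : HModAlg H) (q : A -> R) : cont_seminorm A q ->
  exists L K, 0 <= K /\ forall h a, q (act A h a) <= K * (bnorm H h * maxl (sn A) L a).
Proof.
  intros [Hs [Lq [Kq HKq]]].
  destruct (list_bound (fun i (p : H * A) => sn A i (act A (fst p) (snd p)))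
              (fun L (p : H * A) => bnorm H (fst p) * maxl (sn A) L (snd p))) with (L0 := Lq)
    as [L [K [HK1 HK2]]].
  - intros; apply Rmult_le_pos; [apply bn_ge0|apply maxl_ge0].
  - intros; apply Rmult_le_compat_l; [apply bn_ge0|apply maxl_appl].
  - intros; apply Rmult_le_compat_l; [apply bn_ge0|apply maxl_appr].
  - intros i. destruct (proj2 (act_cbil H A) i) as [L1 [L2 [K HK]]].
    destruct (snH_bn H L1) as [c1 [Hc1 H1]].
    exists L2, (Rabs K * c1 * 1). intros [h a]; simpl.
    eapply Rle_trans; [apply HK|]. apply prod3; auto; try lra; try apply maxl_ge0.
  - exists L, (Rabs Kq * K). split; [pose proof (Rabs_pos Kq); nra|]. intros h a.
    eapply Rle_trans; [apply HKq|]. eapply Rle_trans; [apply abs_bound, maxl_ge0|].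
    rewrite Rmult_assoc. apply Rmult_le_compat_l; [apply Rabs_pos|]. apply (HK2 (h, a)).
Qed.

Definition ball (H : BBialg) := {h : H | bnorm H h <= 1}.
Definition qp (H : BBialg) (A : HModAlg H) (q : A -> R) (a : A) : R :=
  supf (fun h : ball H => q (act A (proj1_sig h) a)).

Lemma qp_bound (H : BBialg) (A : HModAlg H) (q : A -> R) : cont_seminorm A q ->
  exists L K, 0 <= K /\ forall a (h : ball H), q (act A (proj1_sig h) a) <= K * maxl (sn A) L a.
Proof.
  intros Hq. destruct (bnd_act H A q Hq) as [L [K [HK1 HK2]]]. exists L, K. split; auto.
  intros a [h Hh]; simpl. eapply Rle_trans; [apply HK2|]. apply Rmult_le_compat_l; auto.
  pose proof (maxl_ge0 (sn A) L a). pose proof (bn_ge0 H h). nra.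
Qed.


Lemma qp_ge (H : BBialg) (A : HModAlg H) q h a : cont_seminorm A q -> bnorm H h <= 1 ->
  q (act A h a) <= qp H A q a.
Proof.
  intros Hq Hh. destruct (qp_bound H A q Hq) as [L [K [_ HK]]].
  apply (supf_ge (fun h : ball H => q (act A (proj1_sig h) a)) _ (exist _ h Hh) (HK a)).
Qed.
Lemma qp_ge0 (H : BBialg) (A : HModAlg H) q a : cont_seminorm A q -> 0 <= qp H A q a.
Proof.
  intros Hq. destruct (qp_bound H A q Hq) as [L [K [_ HK]]].
  apply (supf_ge0 (fun h : ball H => q (act A (proj1_sig h) a)) _ (HK a)).
Qed.
Lemma qp_le (H : BBialg) (A : HModAlg H) q a M : 0 <= M ->
  (forall h, bnorm H h <= 1 -> q (act A h a) <= M) -> qp H A q a <= M.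
Proof.
  intros H0 HM. apply supf_le; auto. intros [h Hh]; simpl; auto.
Qed.
Lemma qp_cont (H : BBialg) (A : HModAlg H) q : cont_seminorm A q ->
  exists L K, 0 <= K /\ forall a, qp H A q a <= K * maxl (sn A) L a.
Proof.
  intros Hq. destruct (qp_bound H A q Hq) as [L [K [HK1 HK]]]. exists L, K. split; auto.
  intros a. apply qp_le. { apply Rmult_le_pos; auto; apply maxl_ge0. }
  intros h Hh. apply (HK a (exist _ h Hh)).
Qed.

Lemma qp_scale (H : BBialg) (A : HModAlg H) q h a : cont_seminorm A q ->
  q (act A h a) <= bnorm H h * qp H A q a.
Proof.
  intros Hq. pose proof (proj1 Hq) as Hs. destruct (Req_dec (bnorm H h) 0) as [H0|H0].
  - apply bnorm_sep in H0. subst h. rewrite (lin0 _ (act_lin1 H A a)), semi0; auto.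
    pose proof (qp_ge0 H A q a Hq). pose proof (bn_ge0 H (vzero H)). nra.
  - set (r := bnorm H h). assert (Hr : 0 < r) by (pose proof (bn_ge0 H h); unfold r in *; lra).
    set (h' := vscal (Cr (/ r)) h).
    assert (Hh' : bnorm H h' = 1).
    { unfold h'. rewrite (semi_r H); [|apply bn_semi]. fold r. rewrite Rabs_pos_eq.
      - field; lra.
      - apply Rlt_le, Rinv_0_lt_compat; auto. }
    assert (Hhh : h = vscal (Cr r) h').
    { unfold h'. rewrite vscalA, Cmul_r. replace (r * / r) with 1 by (field; lra).
      rewrite <- C1_r, vscal1. auto. }
    rewrite Hhh at 1. rewrite (proj2 (act_lin1 H A a)). rewrite (semi_r A); auto.
    rewrite Rabs_pos_eq by lra. apply Rmult_le_compat_l; [lra|]. apply qp_ge; auto. lra.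
Qed.

Lemma qp_semi (H : BBialg) (A : HModAlg H) q : cont_seminorm A q -> is_seminorm A (qp H A q).
Proof.
  intros Hq. pose proof (proj1 Hq) as Hs. split.
  - intros x y. apply qp_le. { pose proof (qp_ge0 H A q x Hq); pose proof (qp_ge0 H A q y Hq); lra. }
    intros h Hh. rewrite (proj1 (act_lin2 H A h)). eapply Rle_trans; [apply Hs|].
    pose proof (qp_ge H A q h x Hq Hh); pose proof (qp_ge H A q h y Hq Hh); lra.
  - intros c x. unfold qp. destruct (qp_bound H A q Hq) as [L [K [_ HK]]].
    rewrite <- (supf_scale _ _ _ (Cmod_ge0 c) (HK x)). f_equal.
    apply functional_extensionality; intros h. rewrite (proj2 (act_lin2 H A _)). apply Hs.
Qed.

Lemma qp_stable (H : BBialg) (A : HModAlg H) q : cont_seminorm A q ->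
  exists C, 0 <= C /\ forall k a, qp H A q (act A k a) <= C * bnorm H k * qp H A q a.
Proof.
  intros Hq. destruct (bn_mul H) as [C [HC HCm]]. exists C. split; auto. intros k a.
  apply qp_le. { pose proof (bn_ge0 H k); pose proof (qp_ge0 H A q a Hq); apply Rmult_le_pos; auto; nra. }
  intros h Hh. rewrite <- act_mul. eapply Rle_trans; [apply qp_scale; auto|].
  pose proof (HCm h k). pose proof (bn_ge0 H k). pose proof (bn_ge0 H h). pose proof (qp_ge0 H A q a Hq).
  apply Rmult_le_compat_r; auto. eapply Rle_trans; [apply HCm|].
  rewrite Rmult_assoc, (Rmult_comm (bnorm H h)), <- Rmult_assoc.
  pattern (C * bnorm H k) at 2; rewrite <- Rmult_1_r. apply Rmult_le_compat_l; auto.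
  apply Rmult_le_pos; auto.
Qed.

Lemma q_le_qp (H : BBialg) (A : HModAlg H) q a : cont_seminorm A q ->
  q a <= bnorm H (aone H) * qp H A q a.
Proof. intros Hq. rewrite <- (act_1 H A a) at 1. apply qp_scale; auto. Qed.

Lemma amul_lin1 (A : LCAlg) y : Defs.linear (fun x : A => amul x y).
Proof. exact (proj1 (proj1 (amul_cbil A)) y). Qed.
Lemma amul_lin2 (A : LCAlg) (x : A) : Defs.linear (amul x).
Proof. exact (proj2 (proj1 (amul_cbil A)) x). Qed.

Definition Sidx (H : BBialg) (A : HModAlg H) (q : A -> R) :=
  {p : A * A | qp H A q (fst p) <= 1 /\ qp H A q (snd p) <= 1}.

Lemma phi_pt (H : BBialg) (A : HModAlg H) q : cont_seminorm A q -> submult A q ->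
  forall x y (s : Sidx H A q),
  q (amul (act A x (fst (proj1_sig s))) (act A y (snd (proj1_sig s)))) <= bnorm H x * bnorm H y.
Proof.
  intros Hq Hsub x y [[a b] [Ha Hb]]; simpl in *.
  eapply Rle_trans; [apply Hsub|].
  pose proof (qp_scale H A q x a Hq). pose proof (qp_scale H A q y b Hq).
  pose proof (qp_ge0 H A q a Hq). pose proof (qp_ge0 H A q b Hq).
  pose proof (bn_ge0 H x). pose proof (bn_ge0 H y).
  pose proof (semi_ge0 A q (act A x a) (proj1 Hq)). pose proof (semi_ge0 A q (act A y b) (proj1 Hq)).
  apply Rmult_le_compat; auto.
  - eapply Rle_trans; [eauto|]. pattern (bnorm H x) at 2; rewrite <- Rmult_1_r. apply Rmult_le_compat_l; auto.
  - eapply Rle_trans; [eauto|]. pattern (bnorm H y) at 2; rewrite <- Rmult_1_r. apply Rmult_le_compat_l; auto.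
Qed.

Definition phiG (H : BBialg) (A : HModAlg H) q (Hq : cont_seminorm A q) (Hsub : submult A q)
  (x y : H) : GL A q (Sidx H A q) (proj1 Hq) :=
  exist _ (fun s => amul (act A x (fst (proj1_sig s))) (act A y (snd (proj1_sig s))))
    (ex_intro _ (bnorm H x * bnorm H y) (phi_pt H A q Hq Hsub x y)).

Lemma act_fix_bound (H : BBialg) (A : HModAlg H) (a : A) L0 :
  exists L K, 0 <= K /\ forall x, maxl (sn A) L0 (act A x a) <= K * maxl (sn H) L x.
Proof.
  apply (list_bound (fun i x => sn A i (act A x a)) (fun L x => maxl (sn H) L x)).
  - intros; apply maxl_ge0.
  - intros; apply maxl_appl.
  - intros; apply maxl_appr.
  - intros i. destruct (proj2 (act_cbil H A) i) as [L1 [L2 [K HK]]].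
    exists L1, (K * maxl (sn A) L2 a). intros x. eapply Rle_trans; [apply HK|]. right; ring.
Qed.

Lemma phi_cbil (H : BBialg) (A : HModAlg H) q (Hq : cont_seminorm A q) (Hsub : submult A q) :
  cont_bilinear (phiG H A q Hq Hsub).
Proof.
  split; [split|].
  - intros y; split.
    + intros x x'. apply bnd_eq; intros s; simpl.
      rewrite (proj1 (act_lin1 H A _)). apply (proj1 (amul_lin1 A _)).
    + intros c x. apply bnd_eq; intros s; simpl.
      rewrite (proj2 (act_lin1 H A _)). apply (proj2 (amul_lin1 A _)).
  - intros x; split.
    + intros y y'. apply bnd_eq; intros s; simpl.
      rewrite (proj1 (act_lin1 H A _)). apply (proj1 (amul_lin2 A _)).
    + intros c y. apply bnd_eq; intros s; simpl.
      rewrite (proj2 (act_lin1 H A _)). apply (proj2 (amul_lin2 A _)).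
  - intros [[i s]|].
    + destruct (proj2 (amul_cbil A) i) as [L1 [L2 [K HK]]].
      destruct (act_fix_bound H A (fst (proj1_sig s)) L1) as [La [Ka [HKa HKa']]].
      destruct (act_fix_bound H A (snd (proj1_sig s)) L2) as [Lb [Kb [HKb HKb']]].
      exists La, Lb, (Rabs K * Ka * Kb). intros x y. simpl.
      eapply Rle_trans; [apply HK|].
      replace (Rabs K * Ka * Kb * maxl (sn H) La x * maxl (sn H) Lb y) with
        ((Rabs K * Ka * Kb) * (maxl (sn H) La x * maxl (sn H) Lb y)) by ring.
      apply prod3; auto; apply maxl_ge0.
    + destruct (bn_snH H) as [Lb [Kb [HKb HbL]]].
      exists Lb, Lb, (Kb * Kb). intros x y. simpl.
      pose proof (maxl_ge0 (sn H) Lb x). pose proof (maxl_ge0 (sn H) Lb y).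
      apply supf_le. { apply Rmult_le_pos; [apply Rmult_le_pos|]; nra. }
      intros s. eapply Rle_trans; [apply (phi_pt H A q Hq Hsub x y s)|].
      replace (Kb * Kb * maxl (sn H) Lb x * maxl (sn H) Lb y) with
        ((Kb * maxl (sn H) Lb x) * (Kb * maxl (sn H) Lb y)) by ring.
      apply Rmult_le_compat; auto; apply bn_ge0.
Qed.

Lemma Delta_bn (H : BBialg) L0 : exists K, 0 <= K /\ forall h, maxl (sn (bHH H)) L0 (Defs.Delta H h) <= K * bnorm H h.
Proof.
  destruct (list_bound (fun i h => sn (bHH H) i (Defs.Delta H h)) (fun (_ : list unit) h => bnorm H h)) with (L0 := L0)
    as [L [K [HK1 HK2]]].
  - intros; apply bn_ge0.
  - intros; lra.
  - intros; lra.
  - intros i. destruct (proj2 (Delta_cl H) i) as [L [K HK]]. destruct (snH_bn H L) as [c [Hc Hc']].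
    exists nil, (Rabs K * c). intros h. eapply Rle_trans; [apply HK|].
    eapply Rle_trans; [apply abs_bound, maxl_ge0|]. rewrite Rmult_assoc.
    apply Rmult_le_compat_l; [apply Rabs_pos|auto].
  - exists K; auto.
Qed.

Lemma tensor_bound (H : BBialg) (A : HModAlg H) q : cont_seminorm A q -> submult A q ->
  exists K, 0 <= K /\ forall h a b, qp H A q a <= 1 -> qp H A q b <= 1 ->
    q (act A h (amul a b)) <= K * bnorm H h.
Proof.
  intros Hq Hsub.
  set (G := GL A q (Sidx H A q) (proj1 Hq)).
  assert (HG : Defs.complete G) by (apply GL_complete; [apply acomplete|apply (proj2 Hq)]).
  destruct (proj2 (proj2 (btens_pt H)) G (phiG H A q Hq Hsub) HG (phi_cbil H A q Hq Hsub))
    as [[Psi [HPsi HPsieq]] _].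
  destruct (proj2 HPsi None) as [LP [KP HKP]].
  destruct (Delta_bn H LP) as [c [Hc Hc']].
  exists (Rabs KP * c). split; [apply Rmult_le_pos; auto; apply Rabs_pos|].
  intros h a b Ha Hb.
  set (s := exist _ (a, b) (conj Ha Hb) : Sidx H A q).
  assert (Hlin : cont_linear (fun z => proj1_sig (Psi z) s)).
  { split; [split|].
    - intros z z'. rewrite (proj1 (proj1 HPsi)). reflexivity.
    - intros c' z. rewrite (proj2 (proj1 HPsi)). reflexivity.
    - intros j. destruct (proj2 HPsi (Some (j, s))) as [L [K HK]]. exists L, K. intros z. apply (HK z). }
  rewrite (act_amul H A a b (fun z => proj1_sig (Psi z) s) Hlin).
  2:{ intros x y. rewrite HPsieq. reflexivity. }
  eapply Rle_trans; [apply (pt_le_sup A q (Sidx H A q) (Psi (Defs.Delta H h)) s)|].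
  eapply Rle_trans; [apply (HKP (Defs.Delta H h))|].
  eapply Rle_trans; [apply abs_bound, maxl_ge0|]. rewrite Rmult_assoc.
  apply Rmult_le_compat_l; [apply Rabs_pos|auto].
Qed.

Lemma lim2 (X M al be : R) : 0 <= al -> 0 <= be -> 0 <= M ->
  (forall t s, al < t -> be < s -> X <= M * t * s) -> X <= M * al * be.
Proof.
  intros Ha Hb HM Hh. apply le_eps. intros eps He.
  set (P := M * (al + be + 1) + 1). assert (HP : 0 < P) by (unfold P; nra).
  set (e := Rmin 1 (eps / P)).
  assert (He0 : 0 < e) by (unfold e; apply Rmin_pos; [lra|apply Rdiv_lt_0_compat; auto]).
  assert (He1 : e <= 1) by apply Rmin_l.
  assert (He2 : e * P <= eps).
  { assert (e <= eps / P) by apply Rmin_r. apply (Rmult_le_compat_r P) in H; [|lra].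
    unfold Rdiv in H. rewrite Rmult_assoc, Rinv_l in H by lra. lra. }
  specialize (Hh (al + e) (be + e) ltac:(lra) ltac:(lra)).
  assert (M * (al + e) * (be + e) <= M * al * be + e * P).
  { unfold P. assert (M * e * e <= M * e * 1) by (apply Rmult_le_compat_l; nra). nra. }
  lra.
Qed.

Lemma qp_submult (H : BBialg) (A : HModAlg H) q : cont_seminorm A q -> submult A q ->
  exists D, 1 <= D /\ forall a b, qp H A q (amul a b) <= D * qp H A q a * qp H A q b.
Proof.
  intros Hq Hsub. destruct (tensor_bound H A q Hq Hsub) as [K [HK0 HK]].
  pose proof (qp_semi H A q Hq) as Hqs. pose proof (proj1 Hq) as Hs.
  exists (K + 1). split; [lra|]. intros a b.
  pose proof (qp_ge0 H A q a Hq). pose proof (qp_ge0 H A q b Hq).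
  apply Rle_trans with (K * qp H A q a * qp H A q b).
  2:{ apply Rmult_le_compat_r; auto. apply Rmult_le_compat_r; auto. lra. }
  apply qp_le. { apply Rmult_le_pos; [apply Rmult_le_pos|]; auto. }
  intros h Hh. apply lim2; auto. intros t s Ht Hs'.
  set (a' := vscal (Cr (/ t)) a). set (b' := vscal (Cr (/ s)) b).
  assert (Hti : 0 < / t) by (apply Rinv_0_lt_compat; lra).
  assert (Hsi : 0 < / s) by (apply Rinv_0_lt_compat; lra).
  assert (Ha' : qp H A q a' <= 1).
  { unfold a'. rewrite (semi_r A _ _ _ Hqs), Rabs_pos_eq by lra.
    apply (Rmult_le_reg_l t); [lra|]. rewrite <- Rmult_assoc, Rinv_r by lra. lra. }
  assert (Hb' : qp H A q b' <= 1).
  { unfold b'. rewrite (semi_r A _ _ _ Hqs), Rabs_pos_eq by lra.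
    apply (Rmult_le_reg_l s); [lra|]. rewrite <- Rmult_assoc, Rinv_r by lra. lra. }
  specialize (HK h a' b' Ha' Hb').
  assert (Hab : amul a' b' = vscal (Cr (/ t * / s)) (amul a b)).
  { unfold a', b'. rewrite (proj2 (amul_lin1 A _)), (proj2 (amul_lin2 A _)), vscalA, Cmul_r. auto. }
  rewrite Hab, (proj2 (act_lin2 H A h)), (semi_r A _ _ _ Hs), Rabs_pos_eq in HK
    by (apply Rmult_le_pos; lra).
  assert (HK' : / t * / s * q (act A h (amul a b)) <= K) by (pose proof (bn_ge0 H h); nra).
  apply (Rmult_le_compat_l (t * s)) in HK'; [|nra].
  replace (t * s * (/ t * / s * q (act A h (amul a b)))) with (q (act A h (amul a b))) in HK'
    by (field; lra).
  lra.
Qed.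

Lemma scale_semi (E : LCS) (p : E -> R) (D : R) : 0 <= D -> is_seminorm E p -> is_seminorm E (fun x => D * p x).
Proof.
  intros HD [Ht Hh]. split.
  - intros x y. rewrite <- Rmult_plus_distr_l. apply Rmult_le_compat_l; auto.
  - intros c x. rewrite Hh. ring.
Qed.

Theorem proposition5p11 (H : BBialg) (A : HModAlg H) :
  ArensMichael A ->
  exists (J : Type) (q : J -> A -> R),
    defining_family A J q /\
    forall j, submult A (q j) /\ H_stable H A (q j).
Proof.
  intros [J [qf [[Hcont Hdef] Hsm]]].
  set (Dj := fun j => epsilon (inhabits 0) (fun D => 1 <= D /\ forall a b,
          qp H A (qf j) (amul a b) <= D * qp H A (qf j) a * qp H A (qf j) b)).
  assert (HD : forall j, 1 <= Dj j /\ forall a b,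
          qp H A (qf j) (amul a b) <= Dj j * qp H A (qf j) a * qp H A (qf j) b).
  { intros j. unfold Dj. apply epsilon_spec. apply qp_submult; auto. }
  exists J, (fun j a => Dj j * qp H A (qf j) a). split; [split|].
  - intros j. destruct (HD j) as [HD1 _]. split.
    + apply scale_semi; [lra|]. apply qp_semi; auto.
    + destruct (qp_cont H A (qf j) (Hcont j)) as [L [K [HK HK']]]. exists L, (Dj j * K).
      intros x. rewrite Rmult_assoc. apply Rmult_le_compat_l; [lra|auto].
  - intros i. destruct (Hdef i) as [L [K HK]].
    set (b1 := bnorm H (aone H)). assert (Hb1 : 0 <= b1) by apply bn_ge0.
    exists L, (Rabs K * b1). intros x.
    eapply Rle_trans; [apply HK|]. eapply Rle_trans; [apply abs_bound, maxl_ge0|].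
    rewrite Rmult_assoc. apply Rmult_le_compat_l; [apply Rabs_pos|].
    apply maxl_lub. { apply Rmult_le_pos; auto; apply maxl_ge0. }
    intros j Hj. eapply Rle_trans; [apply q_le_qp; auto|]. fold b1.
    apply Rmult_le_compat_l; auto.
    eapply Rle_trans; [|apply (maxl_in (fun j a => Dj j * qp H A (qf j) a) L x j Hj)].
    simpl. destruct (HD j) as [HD1 _]. pose proof (qp_ge0 H A (qf j) x (Hcont j)). nra.
  - intros j. destruct (HD j) as [HD1 HD2]. split.
    + intros a b. pose proof (HD2 a b).
      pose proof (qp_ge0 H A (qf j) a (Hcont j)). pose proof (qp_ge0 H A (qf j) b (Hcont j)).
      apply Rle_trans with (Dj j * (Dj j * qp H A (qf j) a * qp H A (qf j) b)).
      * apply Rmult_le_compat_l; [lra|auto].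
      * right; ring.
    + destruct (qp_stable H A (qf j) (Hcont j)) as [C [HC HC']].
      exists (fun k => C * bnorm H k). split; [split|].
      * apply scale_semi; auto. apply bn_semi.
      * destruct (bn_snH H) as [Lb [Kb [HKb HbL]]]. exists Lb, (C * Kb). intros k.
        rewrite Rmult_assoc. apply Rmult_le_compat_l; auto.
      * intros k a. pose proof (HC' k a).
        apply Rle_trans with (Dj j * (C * bnorm H k * qp H A (qf j) a)).
        -- apply Rmult_le_compat_l; [lra|auto].
        -- right; ring.
Qed.
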